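(* Let $k\geqslant 5$. There exists a non-decreasing function $f:\mathbb{N}\to\mathbb{N}$ with $n\leqslant f(n)\leqslant R(K_n^{(k)})$ for all $n$, such that for all $c,C>0$ and any $n_0$, there is an $n>n_0$ such that $$R(H)\leqslant c f(n)\quad\text{or}\quad R(H)\geqslant C f(n)$$ for every $k$-graph $H$ on $n$ vertices.
   Context: A $k$-graph is a pair $H=(V,E)$ where every edge $e\in E$ is a $k$-element subset of the vertex set $V$. $K_n^{(k)}$ is the $k$-graph on $n$ vertices in which every $k$-element subset of vertices is an edge. For a $k$-graph $H$, the Ramsey number $R(H)$ is the smallest integer $N$ such that every red-blue colouring of the edges of $K_N^{(k)}$ contains a copy of $H$ all of whose edges have the same colour. *)

(* Defs.v *)
From mathcomp Require Import all_boot.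
From Stdlib Require Import ClassicalEpsilon.
From Stdlib Require Import Rdefinitions Raxioms.

Set Implicit Arguments.
Unset Strict Implicit.
Unset Printing Implicit Defensive.

(* A k-graph on the vertex set 'I_n is a set E of subsets of 'I_n, all of size k. *)
Definition uniform (k n : nat) (E : {set {set 'I_n}}) : bool :=
  [forall e in E, #|e| == k].

Definition complete_kgraph (k n : nat) : {set {set 'I_n}} :=
  [set e : {set 'I_n} | #|e| == k].

(* Every red/blue colouring (true/false) of the subsets of 'I_N (only the
   k-subsets matter) contains a copy of H = ('I_n, E), i.e. an injective
   vertex map phi such that all images phi(e), e in E, receive the same colour. *)
Definition ramsey_prop (n : nat) (E : {set {set 'I_n}}) (N : nat) : bool :=
  [forall col : {ffun {set 'I_N} -> bool},
    [exists phi : {ffun 'I_n -> 'I_N},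
      injectiveb phi &&
      ([forall e in E, col (phi @: e)] || [forall e in E, ~~ col (phi @: e)])]].

(* R(H): the least N with ramsey_prop (exists by Ramsey's theorem; 0 otherwise). *)
Definition ramsey_number (n : nat) (E : {set {set 'I_n}}) : nat :=
  match excluded_middle_informative (exists N, ramsey_prop E N) with
  | left ex => ex_minn ex
  | right _ => 0
  end.

(* Main.v *)
Require Import Defs.
From mathcomp Require Import all_boot.
From Stdlib Require Import Rdefinitions Raxioms.
From Stdlib Require Import ClassicalEpsilon.
(* re-import mathcomp so that its nat notations (e.g. ^ = expn) take precedence *)
From mathcomp Require Import all_boot zify.

Set Implicit Arguments.
Unset Strict Implicit.
Unset Printing Implicit Defensive.

Definition mono (T : finType) (chi : {set T} -> bool) (j : nat) (S : {set T}) (b : bool) :=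
  forall A : {set T}, A \subset S -> #|A| = j -> chi A = b.
Definition good (T : finType) (chi : {set T} -> bool) (j n : nat) :=
  forall (S : {set T}) (b : bool), n <= #|S| -> ~ mono chi j S b.

Lemma sub_of_card (T : finType) (S : {set T}) n :
  n <= #|S| -> exists S' : {set T}, S' \subset S /\ #|S'| = n.
Proof.
move=> h; move: {2}#|S| (erefl #|S|) => c; elim: c S h => [|c IH] S h hc.
  by exists S; split=> //; lia.
have [hn|hn] := eqVneq n #|S|; first by exists S; rewrite hn.
have : 0 < #|S| by lia.
case/card_gt0P => x xS.
have cS : #|S :\ x| = c by have := cardsD1 x S; rewrite xS; lia.
have [S' [s1 s2]] := IH (S :\ x) ltac:(lia) cS.
exists S'; split=> //; apply: subset_trans s1 _; exact: subsetDl.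
Qed.

Lemma mono_sub (T : finType) (chi : {set T} -> bool) j (S S' : {set T}) b :
  mono chi j S b -> S' \subset S -> mono chi j S' b.
Proof. by move=> m s A sA cA; apply: m => //; apply: subset_trans sA s. Qed.

Lemma good_inj (T T' : finType) (f : T' -> T) (finj : injective f)
   (chi : {set T} -> bool) j n :
  good chi j n -> good (fun A => chi (f @: A)) j n.
Proof.
move=> g S b hS m; apply: (g (f @: S) b); first by rewrite card_imset.
move=> A sA cA.
have eA : f @: [set x in S | f x \in A] = A.
  apply/setP=> y; apply/imsetP/idP => [[x] | yA].
    by rewrite inE => /andP[_ ?] ->.
  have := subsetP sA y yA; case/imsetP => x xS ey.
  by exists x => //; rewrite inE xS -ey yA.
rewrite -eA; apply: m; first by apply/subsetP=> x; rewrite inE => /andP[].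
by rewrite -cA -{2}eA card_imset.
Qed.

Lemma mono_ext (T : finType) (chi : {set T} -> bool) k (v : T) (S : {set T}) b :
  mono (fun A => chi (v |: A)) k S b -> mono chi k.+1 S b -> v \notin S ->
  mono chi k.+1 (v |: S) b.
Proof.
move=> m1 m2 vS A sA cA.
case vA: (v \in A).
  have -> : A = v |: (A :\ v) by rewrite setD1K.
  apply: m1.
    apply/subsetP=> x; rewrite inE => /andP[xv xA].
    by have := subsetP sA x xA; rewrite inE (negbTE xv).
  by have := cardsD1 v A; rewrite vA cA; lia.
apply: m2 => //; apply/subsetP=> x xA; have := subsetP sA x xA.
rewrite !inE; case/orP=> // /eqP ex; by move: xA; rewrite ex vA.
Qed.

Lemma ramsey_ex k : forall s t, exists N, forall (T : finType) (U : {set T})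
  (chi : {set T} -> bool), N <= #|U| -> exists S : {set T}, S \subset U /\
   ((s <= #|S| /\ mono chi k S true) \/ (t <= #|S| /\ mono chi k S false)).
Proof.
elim: k => [|k IHk] s t.
  exists (s + t) => T U chi hU; exists U; split=> //.
  have m0 : forall A : {set T}, #|A| = 0 -> A = set0 by move=> A /eqP; rewrite cards_eq0 => /eqP.
  case c0: (chi set0); [left|right]; (split; first lia); by move=> A _ /m0 ->.
suff H : forall q s t, s + t <= q -> exists N, forall (T : finType) (U : {set T})
  (chi : {set T} -> bool), N <= #|U| -> exists S : {set T}, S \subset U /\
   ((s <= #|S| /\ mono chi k.+1 S true) \/ (t <= #|S| /\ mono chi k.+1 S false)).
  exact: (H (s + t)).
have m0 : forall (T : finType) (chi : {set T} -> bool) b, mono chi k.+1 set0 b.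
  by move=> T chi b A; rewrite subset0 => /eqP ->; rewrite cards0.
elim=> [|q IHq] {}s {}t hst.
  exists 0 => T U chi _; exists set0; split; first exact: sub0set.
  by left; split; [lia | exact: m0].
case: s hst => [|s] hst.
  exists 0 => T U chi _; exists set0; split; first exact: sub0set.
  by left; split; [lia | exact: m0].
case: t hst => [|t] hst.
  exists 0 => T U chi _; exists set0; split; first exact: sub0set.
  by right; split; [lia | exact: m0].
have [N1 H1] := IHq s t.+1 ltac:(lia).
have [N2 H2] := IHq s.+1 t ltac:(lia).
have [N3 H3] := IHk N1 N2.
exists N3.+1 => T U chi hU.
have : 0 < #|U| by lia.
case/card_gt0P => v vU.
have cU : #|U :\ v| = #|U| - 1 by have := cardsD1 v U; rewrite vU; lia.
have [S' [sS' [[c1 mS']|[c2 mS']]]] := H3 T (U :\ v) (fun A => chi (v |: A)) ltac:(lia).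
- have [S'' [sS'' [[c3 m3]|[c3 m3]]]] := H1 T S' chi c1.
  + have vS'' : v \notin S''.
      apply/negP=> vs; have := subsetP (subset_trans sS'' sS') v vs.
      by rewrite !inE eqxx.
    exists (v |: S''); split.
      by apply/subsetP=> x; rewrite !inE => /orP[/eqP ->//|xs];
        have := subsetP (subset_trans sS'' sS') x xs; rewrite inE => /andP[].
    left; split; first by rewrite cardsU1 vS''; lia.
    apply: mono_ext => //; exact: mono_sub mS' sS''.
  + exists S''; split; last by right.
    by apply: subset_trans sS'' (subset_trans sS' (subsetDl _ _)).
- have [S'' [sS'' [[c3 m3]|[c3 m3]]]] := H2 T S' chi c2.
  + exists S''; split; last by left.
    by apply: subset_trans sS'' (subset_trans sS' (subsetDl _ _)).
  + have vS'' : v \notin S''.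
      apply/negP=> vs; have := subsetP (subset_trans sS'' sS') v vs.
      by rewrite !inE eqxx.
    exists (v |: S''); split.
      by apply/subsetP=> x; rewrite !inE => /orP[/eqP ->//|xs];
        have := subsetP (subset_trans sS'' sS') x xs; rewrite inE => /andP[].
    right; split; first by rewrite cardsU1 vS''; lia.
    apply: mono_ext => //; exact: mono_sub mS' sS''.
Qed.

Lemma card_monoF (aT : finType) (Ps : {set aT}) (b : bool) :
  #|[set f : {ffun aT -> bool} | [forall x in Ps, f x == b]]| * 2 ^ #|Ps| = 2 ^ #|aT|.
Proof.
pose F := fun x : aT => if x \in Ps then (pred1 b : pred bool) else (predT : pred bool).
have -> : #|[set f : {ffun aT -> bool} | [forall x in Ps, f x == b]]| = #|(family F : simpl_pred {ffun aT -> bool})|.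
  apply: eq_card => f; rewrite inE; apply/forall_inP/familyP => h x.
    by rewrite /F; case: ifP => xP //; rewrite inE /=; apply: h.
  by move=> xP; have := h x; rewrite /F xP inE.
rewrite card_family.
have -> : foldr muln 1 [seq #|F x| | x : aT] = \prod_(x : aT) #|F x|.
  by rewrite /image_mem /= foldrE big_map big_enum.
have -> : \prod_(x : aT) #|F x| = \prod_(x : aT) (if x \notin Ps then 2 else 1).
  apply: eq_bigr => x _; rewrite /F; case: ifP => xP /=; first by rewrite card1.
  by rewrite (eq_card (B := predT)) // card_bool.
rewrite -big_mkcond /= (eq_bigl (fun x => x \in ~: Ps)) => [|x]; last by rewrite inE.
by rewrite prod_nat_const -expnD addnC cardsC.
Qed.

Lemma card_bigcup_le (I T : finType) (P : pred I) (F : I -> {set T}) :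
  #|\bigcup_(i | P i) F i| <= \sum_(i | P i) #|F i|.
Proof.
apply: (big_ind2 (fun (X : {set T}) s => #|X| <= s)) => //; first by rewrite cards0.
by move=> X1 s1 X2 s2 h1 h2; rewrite cardsU; lia.
Qed.

Lemma random_good L j n : 'C(L, n) * 2 < 2 ^ 'C(n, j) ->
  exists chi : {set 'I_L} -> bool, good chi j n.
Proof.
move=> hC.
pose T := {set 'I_L}.
pose MS (S : T) b := [set f : {ffun T -> bool} |
   [forall x in [set A : T | A \subset S & #|A| == j], f x == b]].
pose Bad := \bigcup_(S : T | #|S| == n) (MS S true :|: MS S false).
have cMS : forall (S : T) b, #|S| = n -> #|MS S b| * 2 ^ 'C(n,j) = 2 ^ #|T|.
  by move=> S b <-; rewrite -cards_draws card_monoF.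
have hB : #|Bad| * 2 ^ 'C(n,j) < 2 ^ #|T| * 2 ^ 'C(n,j).
  apply: (@leq_ltn_trans ((\sum_(S : T | #|S| == n) (#|MS S true| + #|MS S false|)) * 2 ^ 'C(n,j))).
    rewrite leq_mul2r; apply/orP; right.
    apply: leq_trans (card_bigcup_le _ _) _.
    by apply: leq_sum => S _; rewrite cardsU; lia.
  rewrite big_distrl /= (eq_bigr (fun _ => 2 * 2 ^ #|T|)); last first.
    by move=> S /eqP hS; rewrite mulnDl !cMS //; lia.
  have -> : \sum_(S : T | #|S| == n) 2 * 2 ^ #|T| = 'C(L, n) * (2 * 2 ^ #|T|).
    rewrite (eq_bigl (fun S => S \in [set A : T | #|A| == n])) => [|S]; last by rewrite inE.
    by rewrite sum_nat_const card_draws card_ord.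
  have hX : 0 < 2 ^ #|T| by rewrite expn_gt0.
  move: hX hC; move: (2 ^ #|T|) ('C(L, n)) (2 ^ 'C(n, j)) => X a Y hX hC.
  rewrite mulnA [X in _ < X]mulnC ltn_pmul2r //.
have [f hf] : exists f : {ffun T -> bool}, f \notin Bad.
  case: (pickP (fun f => f \notin Bad)) => [f hf|h]; first by exists f.
  exfalso.
  have eB : Bad = setT by apply/setP => f; have := h f; rewrite inE /=; case: (f \in Bad).
  by move: hB; rewrite eB cardsT card_ffun card_bool ltnn.
exists (fun A => f A) => S b hS m.
have [S' [sS cS]] := sub_of_card hS.
apply: (negP hf); apply/bigcupP; exists S'; first by rewrite cS.
have : f \in MS S' b.
  rewrite inE; apply/forall_inP => A; rewrite inE => /andP[sA /eqP cA]; apply/eqP.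
  exact: (mono_sub m sS) A sA cA.
by clear m; case: b => h; rewrite inE h ?orbT.
Qed.

Definition eqlev l x y := x %/ 2 ^ l == y %/ 2 ^ l.

Lemma Dex x y : exists l, eqlev l x y.
Proof.
exists (x + y); rewrite /eqlev !divn_small //.
  apply: leq_trans (ltn_expl _ (isT : 1 < 2)) _; rewrite leq_exp2l //; lia.
apply: leq_trans (ltn_expl _ (isT : 1 < 2)) _; rewrite leq_exp2l //; lia.
Qed.

Definition Dl x y := ex_minn (Dex x y).

Lemma eqlevS l x y : eqlev l x y -> eqlev l.+1 x y.
Proof. by rewrite /eqlev expnSr !divnMA => /eqP ->. Qed.

Lemma eqlev_le l l' x y : l <= l' -> eqlev l x y -> eqlev l' x y.
Proof.
elim: l' => [|l' IH] h e.
  have l0 : l = 0 by lia.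
  by rewrite -l0.
case: (eqVneq l l'.+1) => [<-//|ne].
by apply: eqlevS; apply: IH => //; lia.
Qed.

Lemma DlP x y l : (Dl x y <= l) = eqlev l x y.
Proof.
rewrite /Dl; case: ex_minnP => d hd hmin.
apply/idP/idP => [h|h]; first exact: eqlev_le h hd.
exact: hmin.
Qed.

Lemma Dl_max x y z : x <= y -> y <= z -> Dl x z = maxn (Dl x y) (Dl y z).
Proof.
move=> xy yz.
have key : forall l, eqlev l x z = eqlev l x y && eqlev l y z.
  move=> l; rewrite /eqlev.
  have h1 := leq_div2r (2 ^ l) xy; have h2 := leq_div2r (2 ^ l) yz.
  move: h1 h2; move: (x %/ 2 ^ l) (y %/ 2 ^ l) (z %/ 2 ^ l) => a b c h1 h2.
  apply/eqP/andP => [e|[/eqP e1 /eqP e2]]; last by lia.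
  split; apply/eqP; lia.
apply/eqP; rewrite eqn_leq; apply/andP; split.
  by rewrite DlP key -!DlP leq_maxl leq_maxr.
by rewrite geq_max !DlP -key -DlP.
Qed.

Lemma Dl_gt0 x y : x != y -> 0 < Dl x y.
Proof.
move=> ne; rewrite lt0n; apply/negP => /eqP h.
have : Dl x y <= 0 by rewrite h.
by rewrite DlP /eqlev expn0 !divn1 (negbTE ne).
Qed.

Lemma Dl_bound x y m : x < 2 ^ m -> y < 2 ^ m -> Dl x y <= m.
Proof. by move=> hx hy; rewrite DlP /eqlev !divn_small. Qed.

Lemma Dl_neq x y z : x < y -> y < z -> Dl x y != Dl y z.
Proof.
move=> xy yz; apply/negP => /eqP e.
have p1 : 0 < Dl x y by apply: Dl_gt0; rewrite neq_ltn xy.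
have h1 : ~~ eqlev (Dl x y).-1 x y by rewrite -DlP; lia.
have h2 : ~~ eqlev (Dl x y).-1 y z by rewrite -DlP; lia.
have h3 : eqlev (Dl x y) x y by rewrite -DlP.
have h4 : eqlev (Dl x y) y z by rewrite -DlP e.
move: h1 h2 h3 h4; rewrite /eqlev.
have -> : Dl x y = (Dl x y).-1.+1 by lia.
rewrite expnSr !divnMA.
have l1 := leq_div2r (2 ^ (Dl x y).-1) (ltnW xy).
have l2 := leq_div2r (2 ^ (Dl x y).-1) (ltnW yz).
move: l1 l2; move: (x %/ _) (y %/ _) (z %/ _) => a b c l1 l2.
move=> /eqP h1 /eqP h2 /eqP h3 /eqP h4; lia.
Qed.

Definition dl x y := (Dl x y).-1.

Lemma dl_max x y z : x < y -> y < z -> dl x z = maxn (dl x y) (dl y z).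
Proof. by move=> xy yz; rewrite /dl (Dl_max (ltnW xy) (ltnW yz)); lia. Qed.

Lemma dl_neq x y z : x < y -> y < z -> dl x y != dl y z.
Proof.
move=> xy yz; have := Dl_neq xy yz.
have h1 : 0 < Dl x y by apply: Dl_gt0; rewrite neq_ltn xy.
have h2 : 0 < Dl y z by apply: Dl_gt0; rewrite neq_ltn yz.
rewrite /dl; move: h1 h2; move: (Dl x y) (Dl y z) => a b h1 h2 /eqP h; apply/eqP; lia.
Qed.

Lemma dl_bound x y m : x < y -> y < 2 ^ m -> dl x y < m.
Proof.
move=> xy ym; have := Dl_bound (ltn_trans xy ym) ym.
have h1 : 0 < Dl x y by apply: Dl_gt0; rewrite neq_ltn xy.
rewrite /dl; lia.
Qed.

Lemma seq_run (d : nat -> nat) len n j (R R' : nat -> nat -> bool) :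
  2 < j -> 2 * n + j <= len ->
  (forall i, i.+1 < len -> d i != d i.+1) ->
  (forall x y, x != y -> ~~ R x y -> R' x y) ->
  (forall i, i + j <= len -> R (d i) (d i.+1) ->
     forall t, t.+2 <= j -> R (d (i + t)) (d (i + t).+1)) ->
  exists a c, a + n <= c /\ c <= len /\
   ((forall t, a <= t -> t.+1 < c -> R (d t) (d t.+1)) \/
    (forall t, a <= t -> t.+1 < c -> R' (d t) (d t.+1))).
Proof.
move=> hj hlen hne hRR' hwin.
case: (boolP [exists p : 'I_len, (p.+1 < len) && R (d p) (d p.+1)]) => [hex|hnex]; last first.
  exists 0, len; split; first lia; split => //; right => t _ ht.
  apply: hRR'; first exact: hne.
  apply/negP => hR; move/existsP: hnex; apply; exists (Ordinal (ltnW ht)); by rewrite /= ht hR.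
have exP : exists p, (p.+1 < len) && R (d p) (d p.+1).
  by case/existsP: hex => p hp; exists p.
case: (ex_minnP exP) => p /andP[hp hRp] hmin.
have hR'p : forall t, t < p -> R' (d t) (d t.+1).
  move=> t tp; apply: hRR'; first by apply: hne; lia.
  apply/negP => hR; have := hmin t; rewrite hR andbT; move=> /(_ ltac:(lia)); lia.
case: (leqP (p + j) len) => hpj; last first.
  exists 0, p.+1; split; first lia; split; first lia.
  by right => t _ ht; apply: hR'p; lia.
have claim : forall i, p <= i -> i + j <= len -> R (d i) (d i.+1).
  move=> i; elim: i => [|i IH] hi hij.
    have p0 : p = 0 by lia.
    by move: hRp; rewrite p0.
  case: (eqVneq p i.+1) => [<-//|ne].
  have := hwin i ltac:(lia) (IH ltac:(lia) ltac:(lia)) 1 ltac:(lia).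
  by rewrite addn1.
have hall : forall i, p <= i -> i.+1 < len -> R (d i) (d i.+1).
  move=> i hi hi1.
  case: (leqP (i + j) len) => hij; first exact: claim.
  have := hwin (len - j) ltac:(lia) (claim (len - j) ltac:(lia) ltac:(lia)) (i - (len - j)) ltac:(lia).
  by have -> : len - j + (i - (len - j)) = i by lia.
case: (leqP (p + n) len) => hpn.
  by exists p, len; split => //; split => //; left => t ht ht1; apply: hall.
exists 0, p.+1; split; first lia; split; first lia.
by right => t _ ht; apply: hR'p; lia.
Qed.

Definition incS m (A : {set 'I_(2 ^ m)}) :=
  [forall x in A, forall y in A, forall z in A, (x < y) && (y < z) ==> (dl x y < dl y z)].
Definition decS m (A : {set 'I_(2 ^ m)}) :=
  [forall x in A, forall y in A, forall z in A, (x < y) && (y < z) ==> (dl y z < dl x y)].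
Definition PhiS m (A : {set 'I_(2 ^ m)}) : {set 'I_m} :=
  [set i : 'I_m | [exists x in A, exists y in A, (x < y) && (dl x y == i)]].
Definition cmpS m (A : {set 'I_(2 ^ m)}) :=
  let s := [seq nat_of_ord x | x <- enum A] in dl (nth 0 s 0) (nth 0 s 1) < dl (nth 0 s 1) (nth 0 s 2).
Definition stepup m (chi : {set 'I_m} -> bool) (A : {set 'I_(2 ^ m)}) :=
  if incS A || decS A then chi (PhiS A) else cmpS A.

Lemma incP m (A : {set 'I_(2 ^ m)}) : reflect (forall x y z, x \in A -> y \in A -> z \in A ->
   x < y -> y < z -> dl x y < dl y z) (incS A).
Proof.
apply: (iffP forall_inP) => [h x y z xA yA zA xy yz | h x xA].
  have /forall_inP/(_ y yA)/forall_inP/(_ z zA)/implyP := h x xA; apply; by rewrite xy yz.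
apply/forall_inP => y yA; apply/forall_inP => z zA; apply/implyP => /andP[]; exact: h.
Qed.

Lemma decP m (A : {set 'I_(2 ^ m)}) : reflect (forall x y z, x \in A -> y \in A -> z \in A ->
   x < y -> y < z -> dl y z < dl x y) (decS A).
Proof.
apply: (iffP forall_inP) => [h x y z xA yA zA xy yz | h x xA].
  have /forall_inP/(_ y yA)/forall_inP/(_ z zA)/implyP := h x xA; apply; by rewrite xy yz.
apply/forall_inP => y yA; apply/forall_inP => z zA; apply/implyP => /andP[]; exact: h.
Qed.

Lemma PhiP m (A : {set 'I_(2 ^ m)}) (i : 'I_m) :
  reflect (exists x y, [/\ x \in A, y \in A, x < y & dl x y = i]) (i \in PhiS A).
Proof.
rewrite inE; apply: (iffP existsP) => [[x /andP[xA /existsP[y /andP[yA /andP[xy /eqP e]]]]]|[x [y [xA yA xy e]]]].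
  by exists x, y.
by exists x; rewrite xA; apply/existsP; exists y; rewrite yA xy e eqxx.
Qed.

Lemma inc_extract m (hm : 0 < m) (X : {set 'I_(2 ^ m)}) x0 :
  x0 \in X -> (forall y, y \in X -> x0 <= y) -> incS X ->
  exists D : {set 'I_m}, #|D| = #|X| - 1 /\ forall B : {set 'I_m}, B \subset D ->
    exists A : {set 'I_(2 ^ m)}, [/\ A \subset X, #|A| = #|B| + 1, incS A & PhiS A = B].
Proof.
move=> x0X x0min /incP hinc.
pose i0 := Ordinal hm.
pose phi (y : 'I_(2 ^ m)) : 'I_m := insubd i0 (dl x0 y).
pose Y := [set y in X | x0 < y].
have hphi : forall y : 'I_(2 ^ m), x0 < y -> val (phi y) = dl x0 y.
  by move=> y xy; rewrite val_insubd dl_bound.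
have key1 : forall y z : 'I_(2 ^ m), y \in X -> z \in X -> x0 < y -> y < z -> dl x0 z = dl y z.
  move=> y z yX zX xy yz; rewrite (dl_max xy yz).
  by have := hinc _ _ _ x0X yX zX xy yz; lia.
have key2 : forall y z : 'I_(2 ^ m), y \in X -> z \in X -> x0 < y -> y < z -> dl x0 y < dl x0 z.
  move=> y z yX zX xy yz; rewrite (key1 y z) //; exact: hinc.
have inj : {in Y &, injective phi}.
  move=> y z; rewrite !inE => /andP[yX xy] /andP[zX xz] e.
  have e' : dl x0 y = dl x0 z by rewrite -hphi // -hphi // e.
  apply/val_inj; case: (ltngtP y z) => // h.
    by have := key2 y z yX zX xy h; lia.
  by have := key2 z y zX yX xz h; lia.
have cY : #|Y| = #|X| - 1.
  have -> : Y = X :\ x0.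
    apply/setP => y; rewrite !inE; apply/andP/andP => [[yX xy]|[ne yX]]; split => //.
      by rewrite neq_ltn xy orbT.
    have := x0min y yX; have : x0 != y :> nat.
      by apply/eqP => e; apply: (negP ne); apply/eqP; apply: ord_inj.
    move=> h1 h2; lia.
  by have := cardsD1 x0 X; rewrite x0X; lia.
exists (phi @: Y); split; first by rewrite card_in_imset.
move=> B sB.
pose Y' := [set y in Y | phi y \in B].
exists (x0 |: Y'); split.
- apply/subsetP => y; rewrite !inE => /orP[/eqP ->//|/andP[/andP[yX _] _]] //.
- have nx : x0 \notin Y' by rewrite !inE ltnn andbF.
  rewrite cardsU1 nx addnC; congr (_ + _).
  have eB : phi @: Y' = B.
    apply/setP => i; apply/imsetP/idP => [[y] | iB].
      by rewrite inE => /andP[_ h] ->.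
    have := subsetP sB i iB; case/imsetP => y yY ey.
    by exists y => //; rewrite inE yY -ey iB.
  rewrite -eB card_in_imset //; move=> y z yY zY; apply: inj.
    by move: yY; rewrite inE => /andP[].
  by move: zY; rewrite inE => /andP[].
- apply/incP => x y z; rewrite !inE.
  have sub : forall w : 'I_(2 ^ m), (w == x0) || ((w \in X) && (x0 < w)) && (phi w \in B) -> w \in X.
    by move=> w /orP[/eqP ->//|/andP[/andP[]]].
  move=> /sub xX /sub yX /sub zX; exact: hinc.
- apply/setP => i; apply/PhiP/idP => [[x [y [xA yA xy e]]]|iB].
    move: xA yA; rewrite !inE => xA /orP[/eqP ey|/andP[/andP[yX x0y] pB]].
      rewrite ey in xy.
      by have := x0min x ltac:(by move: xA => /orP[/eqP->//|/andP[/andP[]]]); lia.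
    have e2 : dl x y = val (phi y).
      rewrite hphi //; case/orP: xA => [/eqP -> //|/andP[/andP[xX x0x] _]].
      by rewrite (key1 x y).
    by have -> : i = phi y by apply/val_inj; rewrite /= -e2 e.
  have := subsetP sB i iB; case/imsetP => y; rewrite inE => /andP[yX x0y] ey.
  exists x0, y; split => //; first by rewrite !inE eqxx.
    by rewrite !inE yX x0y -ey iB orbT.
  by rewrite ey hphi.
Qed.

Lemma dec_extract m (hm : 0 < m) (X : {set 'I_(2 ^ m)}) x1 :
  x1 \in X -> (forall y, y \in X -> y <= x1) -> decS X ->
  exists D : {set 'I_m}, #|D| = #|X| - 1 /\ forall B : {set 'I_m}, B \subset D ->
    exists A : {set 'I_(2 ^ m)}, [/\ A \subset X, #|A| = #|B| + 1, incS A || decS A & PhiS A = B].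
Proof.
move=> x1X x1max /decP hdec.
pose i0 := Ordinal hm.
pose psi (y : 'I_(2 ^ m)) : 'I_m := insubd i0 (dl y x1).
pose Y := [set y in X | y < x1].
have hpsi : forall y : 'I_(2 ^ m), y < x1 -> val (psi y) = dl y x1.
  by move=> y xy; rewrite val_insubd dl_bound.
have key1 : forall y z : 'I_(2 ^ m), y \in X -> z \in X -> y < z -> z < x1 -> dl y x1 = dl y z.
  move=> y z yX zX yz zx; rewrite (dl_max yz zx).
  by have := hdec _ _ _ yX zX x1X yz zx; lia.
have key2 : forall y z : 'I_(2 ^ m), y \in X -> z \in X -> y < z -> z < x1 -> dl z x1 < dl y x1.
  move=> y z yX zX yz zx; rewrite (key1 y z) //; exact: hdec.
have inj : {in Y &, injective psi}.
  move=> y z; rewrite !inE => /andP[yX xy] /andP[zX xz] e.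
  have e' : dl y x1 = dl z x1 by rewrite -hpsi // -hpsi // e.
  apply/val_inj; case: (ltngtP y z) => // h.
    by have := key2 y z yX zX h xz; lia.
  by have := key2 z y zX yX h xy; lia.
have cY : #|Y| = #|X| - 1.
  have -> : Y = X :\ x1.
    apply/setP => y; rewrite !inE; apply/andP/andP => [[yX xy]|[ne yX]]; split => //.
      by rewrite neq_ltn xy.
    have := x1max y yX; have : y != x1 :> nat.
      by apply/eqP => e; apply: (negP ne); apply/eqP; apply: ord_inj.
    move=> h1 h2; lia.
  by have := cardsD1 x1 X; rewrite x1X; lia.
exists (psi @: Y); split; first by rewrite card_in_imset.
move=> B sB.
pose Y' := [set y in Y | psi y \in B].
exists (x1 |: Y'); split.
- apply/subsetP => y; rewrite !inE => /orP[/eqP ->//|/andP[/andP[yX _] _]] //.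
- have nx : x1 \notin Y' by rewrite !inE ltnn andbF.
  rewrite cardsU1 nx addnC; congr (_ + _).
  have eB : psi @: Y' = B.
    apply/setP => i; apply/imsetP/idP => [[y] | iB].
      by rewrite inE => /andP[_ h] ->.
    have := subsetP sB i iB; case/imsetP => y yY ey.
    by exists y => //; rewrite inE yY -ey iB.
  rewrite -eB card_in_imset //; move=> y z yY zY; apply: inj.
    by move: yY; rewrite inE => /andP[].
  by move: zY; rewrite inE => /andP[].
- apply/orP; right; apply/decP => x y z; rewrite !inE.
  have sub : forall w : 'I_(2 ^ m), (w == x1) || ((w \in X) && (w < x1)) && (psi w \in B) -> w \in X.
    by move=> w /orP[/eqP ->//|/andP[/andP[]]].
  move=> /sub xX /sub yX /sub zX; exact: hdec.
- apply/setP => i; apply/PhiP/idP => [[x [y [xA yA xy e]]]|iB].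
    move: xA yA; rewrite !inE => /orP[/eqP ex|/andP[/andP[xX xx1] pB]] yA.
      rewrite ex in xy.
      by have := x1max y ltac:(by move: yA => /orP[/eqP->//|/andP[/andP[]]]); lia.
    have e2 : dl x y = val (psi x).
      rewrite hpsi //; case/orP: yA => [/eqP -> //|/andP[/andP[yX yx1] _]].
      by rewrite (key1 x y).
    by have -> : i = psi x by apply/val_inj; rewrite /= -e2 e.
  have := subsetP sB i iB; case/imsetP => y; rewrite inE => /andP[yX yx1] ey.
  exists y, x1; split => //; last by rewrite ey hpsi.
    by rewrite !inE yX yx1 -ey iB orbT.
  by rewrite !inE eqxx.
Qed.

Lemma enum_sorted n (A : {set 'I_n}) : sorted (fun x y : 'I_n => x < y) (enum A).
Proof.
have inc_A : sorted ltn (map val (enum A)).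
  rewrite -[enum _](eq_filter (mem_enum _)).
  rewrite -(eq_filter (mem_map val_inj _)) -filter_map.
  by rewrite (sorted_filter ltn_trans) // unlock val_ord_enum iota_ltn_sorted.
by rewrite sorted_map in inc_A.
Qed.

Lemma stepup_good m j n (chi : {set 'I_m} -> bool) : 0 < m -> 2 < j ->
  good chi j n -> good (stepup chi) j.+1 (2 * n + j + 1).
Proof.
move=> hm hj gc S b hS mS.
have : 0 < #|S| by lia.
case/card_gt0P => x0 _.
have [r Er] : exists r, #|S| = r by exists #|S|.
rewrite Er in hS.
pose es := enum S.
pose e t := nth x0 es t.
have sz : size es = r by rewrite -cardE.
have Ein : forall t, t < r -> e t \in S.
  by move=> t ht; rewrite -mem_enum; apply: mem_nth; rewrite sz.
have Elt : forall t1 t2, t1 < t2 -> t2 < r -> e t1 < e t2.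
  move=> t1 t2 h12 h2.
  apply: (sorted_ltn_nth (leT := fun x y : 'I_(2 ^ m) => x < y) ltn_trans x0 (enum_sorted S));
    rewrite ?inE ?sz //; lia.
have Einj : forall t1 t2, t1 < r -> t2 < r -> e t1 = e t2 -> t1 = t2.
  move=> t1 t2 h1 h2 e12; case: (ltngtP t1 t2) => // h.
    by have := Elt _ _ h h2; rewrite e12 ltnn.
  by have := Elt _ _ h h1; rewrite e12 ltnn.
pose d t := dl (e t) (e t.+1).
have hne : forall i, i.+1 < (r - 1) -> d i != d i.+1.
  by move=> i hi; apply: dl_neq; apply: Elt; lia.
have win : forall i, i + j <= (r - 1) ->
   [/\ cmpS [set e (i + t) | t : 'I_j.+1] = (d i < d i.+1),
       stepup chi [set e (i + t) | t : 'I_j.+1] = b,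
       incS [set e (i + t) | t : 'I_j.+1] -> forall t, t.+2 <= j -> d (i + t) < d (i + t).+1 &
       decS [set e (i + t) | t : 'I_j.+1] -> forall t, t.+2 <= j -> d (i + t).+1 < d (i + t)].
  move=> i hij.
  set W := [set e (i + t) | t : 'I_j.+1].
  have WS : W \subset S.
    by apply/subsetP => x /imsetP[t _ ->]; apply: Ein; have := ltn_ord t; lia.
  have cW : #|W| = j.+1.
    rewrite card_imset ?card_ord // => t1 t2 h; apply: ord_inj.
    have := ltn_ord t1; have := ltn_ord t2 => h1 h2.
    have := Einj (i + t1) (i + t2) ltac:(lia) ltac:(lia) h; lia.
  have inW : forall t, t <= j -> e (i + t) \in W.
    by move=> t ht; apply/imsetP; exists (Ordinal (ht : t < j.+1)).
  have inW1 : forall t, t < j -> e (i + t).+1 \in W.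
    by move=> t ht; rewrite -addnS; apply: inW.
  have inW2 : forall t, t.+1 < j -> e (i + t).+2 \in W.
    by move=> t ht; rewrite -!addnS; apply: inW.
  have enumW : enum W = [seq e (i + t) | t <- iota 0 j.+1].
    apply: (irr_sorted_eq (leT := fun x y : 'I_(2 ^ m) => x < y) ltn_trans).
    - by move=> x; exact: ltnn.
    - exact: enum_sorted.
    - apply: (homo_sorted_in (P := fun t => t <= j) (e := ltn)).
      + move=> t1 t2 h1 h2 h12; apply: Elt; lia.
      + by apply/allP => t; rewrite mem_iota; lia.
      + exact: iota_ltn_sorted.
    - move=> x; rewrite mem_enum; apply/imsetP/mapP => [[t _ ->]|[t ht ->]].
        by exists (t : nat) => //; rewrite mem_iota; have := ltn_ord t; lia.
      by move: ht; rewrite mem_iota => ht; exists (Ordinal (ltac:(lia) : t < j.+1)).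
  have hn : forall t, t <= j -> nth 0 [seq nat_of_ord x | x <- enum W] t = e (i + t).
    by move=> t ht; rewrite enumW -map_comp (nth_map 0) ?size_iota // nth_iota.
  split.
  - rewrite /cmpS /=; set s := map _ _.
    have hs : forall t, t <= j -> nth 0 s t = e (i + t) by move=> t ht; exact: hn.
    rewrite (hs 0 ltac:(lia)) (hs 1 ltac:(lia)) (hs 2 ltac:(lia)).
    by rewrite (addn0 i) (addn1 i) (addn2 i).
  - exact: (mS W WS cW).
  - move/incP => h t ht; apply: h; rewrite ?inW ?inW1 ?inW2 //; try lia; apply: Elt; lia.
  - move/decP => h t ht; apply: h; rewrite ?inW ?inW1 ?inW2 //; try lia; apply: Elt; lia.
have Eord : forall u v, u < r -> v < r -> e u < e v -> u < v.
  move=> u v hu hv h; case: (ltngtP u v) => // h'.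
    by have := Elt _ _ h' hu; lia.
  by move: h; rewrite h' ltnn.
have finish : forall (X : {set 'I_(2 ^ m)}) (D : {set 'I_m}), X \subset S -> n <= #|D| ->
   (forall B : {set 'I_m}, B \subset D -> exists A : {set 'I_(2 ^ m)},
       [/\ A \subset X, #|A| = #|B| + 1, incS A || decS A & PhiS A = B]) -> False.
  move=> X D XS hD hB; apply: (gc D b hD) => B sB cB.
  have [A [sA cA iA PA]] := hB B sB.
  have := mS A (subset_trans sA XS) ltac:(by rewrite cA cB addn1).
  by rewrite /stepup iA PA.
have fin : forall a c, a + n <= c -> c <= r - 1 ->
   (forall t, a <= t -> t.+1 < c -> d t < d t.+1) \/
   (forall t, a <= t -> t.+1 < c -> d t.+1 < d t) -> False.
  move=> a c hac hc hrun.
  pose X := [set e (a + t) | t : 'I_(c - a).+1].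
  have XS : X \subset S.
    by apply/subsetP => x /imsetP[t _ ->]; apply: Ein; have := ltn_ord t; lia.
  have cX : #|X| = (c - a).+1.
    rewrite card_imset ?card_ord // => t1 t2 h; apply: ord_inj.
    have := ltn_ord t1; have := ltn_ord t2 => h1 h2.
    have := Einj (a + t1) (a + t2) ltac:(lia) ltac:(lia) h; lia.
  have inX : forall t, t <= c - a -> e (a + t) \in X.
    by move=> t ht; apply/imsetP; exists (Ordinal (ht : t < (c - a).+1)).
  have Xidx : forall x, x \in X -> exists p, p <= c - a /\ x = e (a + p).
    by move=> x /imsetP[t _ ->]; exists t; split => //; have := ltn_ord t; lia.
  case: hrun => [hinc|hdec].
  - have strict : forall u v, a <= u -> u < v -> v < c -> d u < d v.
      move=> u v hu; elim: v => [//|v IH] huv hv.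
      case: (eqVneq u v) => [<-|ne]; first by apply: hinc; lia.
      apply: ltn_trans (IH ltac:(lia) ltac:(lia)) _; apply: hinc; lia.
    have run : forall p q, a <= p -> p < q -> q <= c -> dl (e p) (e q) = d q.-1.
      move=> p q hp; elim: q => [//|q IH] hpq hq.
      case: (eqVneq q p) => [->//|ne].
      rewrite (@dl_max _ (e q)); try (apply: Elt; lia).
      rewrite IH; try lia.
      have := strict q.-1 q ltac:(lia) ltac:(lia) ltac:(lia).
      rewrite /d; have -> : q.-1.+1 = q by lia.
      by move=> h /=; lia.
    have incX : incS X.
      apply/incP => x y z /Xidx[p [hp ->]] /Xidx[q [hq ->]] /Xidx[s' [hs ->]] xy yz.
      have pq := Eord (a + p) (a + q) ltac:(lia) ltac:(lia) xy.
      have qs := Eord (a + q) (a + s') ltac:(lia) ltac:(lia) yz.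
      rewrite !run; try lia.
      apply: strict; lia.
    have minX : forall y, y \in X -> e (a + 0) <= y.
      move=> y /Xidx[p [hp ->]]; rewrite addn0.
      case: (posnP p) => [->|p0]; first by rewrite addn0.
      apply: ltnW; apply: Elt; lia.
    have [D [cD hD]] := inc_extract hm (inX 0 ltac:(lia)) minX incX.
    apply: (finish X D XS); first by rewrite cD cX; lia.
    move=> B sB; have [A [sA cA iA PA]] := hD B sB.
    by exists A; split => //; rewrite iA.
  - have strict : forall u v, a <= u -> u < v -> v < c -> d v < d u.
      move=> u v hu; elim: v => [//|v IH] huv hv.
      case: (eqVneq u v) => [<-|ne]; first by apply: hdec; lia.
      apply: ltn_trans _ (IH ltac:(lia) ltac:(lia)); apply: hdec; lia.
    have run : forall p q, a <= p -> p < q -> q <= c -> dl (e p) (e q) = d p.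
      move=> p q hp; elim: q => [//|q IH] hpq hq.
      case: (eqVneq q p) => [->//|ne].
      rewrite (@dl_max _ (e q)); try (apply: Elt; lia).
      rewrite IH; try lia.
      have := strict p q ltac:(lia) ltac:(lia) ltac:(lia).
      by rewrite /d => h /=; lia.
    have decX : decS X.
      apply/decP => x y z /Xidx[p [hp ->]] /Xidx[q [hq ->]] /Xidx[s' [hs ->]] xy yz.
      have pq := Eord (a + p) (a + q) ltac:(lia) ltac:(lia) xy.
      have qs := Eord (a + q) (a + s') ltac:(lia) ltac:(lia) yz.
      rewrite !run; try lia.
      apply: strict; lia.
    have maxX : forall y, y \in X -> y <= e (a + (c - a)).
      move=> y /Xidx[p [hp ->]].
      case: (eqVneq p (c - a)) => [->//|p0].
      apply: ltnW; apply: Elt; lia.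
    have [D [cD hD]] := dec_extract hm (inX (c - a) ltac:(lia)) maxX decX.
    apply: (finish X D XS); first by rewrite cD cX; lia.
    exact: hD.
clear mS; move: win; case: b => win.
- have hw : forall i, i + j <= r - 1 -> d i.+1 < d i ->
     forall t, t.+2 <= j -> d (i + t).+1 < d (i + t).
    move=> i hij hR.
    have [cW sW iW dW] := win i hij.
    case: (boolP (incS [set e (i + t) | t : 'I_j.+1])) => hi.
      by have := iW hi 0 ltac:(lia); rewrite addn0; lia.
    case: (boolP (decS [set e (i + t) | t : 'I_j.+1])) => hd; first exact: dW.
    by move: sW; rewrite /stepup (negbTE hi) (negbTE hd) /= cW; lia.
  have [a [c [hac [hc hr]]]] := seq_run (d := d) (len := r - 1) (n := n)
     (R := fun x y => y < x) (R' := ltn) hj ltac:(lia) hne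
     ltac:(by move=> x y /= h1 h2; lia) hw.
  apply: (fin a c hac hc); case: hr => h; [right|left]; exact: h.
- have hw : forall i, i + j <= r - 1 -> d i < d i.+1 ->
     forall t, t.+2 <= j -> d (i + t) < d (i + t).+1.
    move=> i hij hR.
    have [cW sW iW dW] := win i hij.
    case: (boolP (decS [set e (i + t) | t : 'I_j.+1])) => hd.
      by have := dW hd 0 ltac:(lia); rewrite addn0; lia.
    case: (boolP (incS [set e (i + t) | t : 'I_j.+1])) => hi; first exact: iW.
    by move: sW; rewrite /stepup (negbTE hi) (negbTE hd) /= cW; lia.
  have [a [c [hac [hc hr]]]] := seq_run (d := d) (len := r - 1) (n := n)
     (R := ltn) (R' := fun x y => y < x) hj ltac:(lia) hne
     ltac:(by move=> x y /= h1 h2; lia) hw.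
  apply: (fin a c hac hc); case: hr => h; [left|right]; exact: h.
Qed.

Lemma rp_of k n N : (forall chi : {set 'I_N} -> bool, exists (S : {set 'I_N}) b,
   n <= #|S| /\ mono chi k S b) -> ramsey_prop (complete_kgraph k n) N.
Proof.
move=> H; apply/forallP => col.
have [S [b [hS mS]]] := H (fun A => col A).
pose phi := [ffun i : 'I_n => enum_val (widen_ord hS i)].
have inj : injective phi.
  move=> i1 i2; rewrite !ffunE => /enum_val_inj /(congr1 val) /= /ord_inj //.
have phiS : forall i, phi i \in S by move=> i; rewrite ffunE; apply: enum_valP.
have key : forall e, e \in complete_kgraph k n -> col (phi @: e) = b.
  move=> e; rewrite inE => /eqP ce; apply: mS; last by rewrite card_imset.
  by apply/subsetP => x /imsetP[i _ ->]; exact: phiS.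
apply/existsP; exists phi; apply/andP; split; first exact/injectiveP.
by clear mS; case: b key => key; apply/orP; [left|right]; apply/forall_inP => e he; rewrite key.
Qed.

Lemma not_rp_of_good k n N (chi : {set 'I_N} -> bool) :
  good chi k n -> ~~ ramsey_prop (complete_kgraph k n) N.
Proof.
move=> g; apply/negP => /forallP /(_ [ffun A => chi A]) /existsP [phi /andP [/injectiveP inj H]].
have main : forall b, (forall e, e \in complete_kgraph k n -> chi (phi @: e) = b) -> False.
  move=> b hb; apply: (g (phi @: setT) b); first by rewrite card_imset // cardsT card_ord.
  move=> A sA cA.
  pose e := phi @^-1: A.
  have eA : phi @: e = A.
    apply/setP => y; apply/imsetP/idP => [[x] | yA].
      by rewrite inE => h ->.
    have := subsetP sA y yA; case/imsetP => x _ ey.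
    by exists x => //; rewrite inE -ey.
  rewrite -eA; apply: hb; rewrite inE; apply/eqP.
  by rewrite -cA -eA card_imset.
case/orP: H => H.
  by apply: (main true) => e he; have := forall_inP H e he; rewrite ffunE.
by apply: (main false) => e he; have := forall_inP H e he; rewrite ffunE; case: (chi _).
Qed.

Lemma RK_exists k n : exists N, ramsey_prop (complete_kgraph k n) N.
Proof.
have [N HN] := ramsey_ex k n n.
exists N; apply: rp_of => chi.
have [S [_ [[h1 h2]|[h1 h2]]]] := HN _ [set: 'I_N] chi ltac:(by rewrite cardsT card_ord).
  by exists S, true.
by exists S, false.
Qed.

Lemma RK_spec k n : ramsey_prop (complete_kgraph k n) (ramsey_number (complete_kgraph k n)).
Proof.
rewrite /ramsey_number; case: excluded_middle_informative => [ex|nex].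
  by case: ex_minnP.
by exfalso; apply: nex; apply: RK_exists.
Qed.

Lemma RK_ge k n : n <= ramsey_number (complete_kgraph k n).
Proof.
have := RK_spec k n; move: (ramsey_number _) => v.
move=> /forallP /(_ [ffun => true]) /existsP [phi /andP [/injectiveP inj _]].
by have := leq_card _ inj; rewrite !card_ord.
Qed.

Lemma RK_gt k n L (chi : {set 'I_L} -> bool) :
  good chi k n -> L < ramsey_number (complete_kgraph k n).
Proof.
move=> g; have := RK_spec k n; move: (ramsey_number _) => v hv.
rewrite ltnNge; apply/negP => hvL.
have winj : injective (widen_ord hvL) by move=> x y /(congr1 val) /= /ord_inj.
have := not_rp_of_good (N := v) (good_inj winj g).
by rewrite hv.
Qed.

Lemma good_mono (T : finType) (chi : {set T} -> bool) j n n' :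
  n <= n' -> good chi j n -> good chi j n'.
Proof. by move=> h g S b hS; apply: g; apply: leq_trans h hS. Qed.

Lemma ffact_le_exp m n : m ^_ n <= m ^ n.
Proof.
elim: n m => [|n IH] m; first by rewrite ffactn0 expn0.
rewrite ffactnS expnS leq_mul //; apply: leq_trans (IH _) _.
case: n {IH} => [|n]; first by rewrite !expn0.
by rewrite leq_exp2r // leq_pred.
Qed.

Lemma bin_le_exp m n : 'C(m, n) <= m ^ n.
Proof.
apply: leq_trans (ffact_le_exp m n); rewrite -bin_ffact.
by apply: leq_pmulr; apply: fact_gt0.
Qed.

Lemma bin_k_lower j p : 3 <= j -> 'C(p + 3, 3) <= 'C(j + p, j).
Proof.
move=> hj.
have e1 : 'C(j + p, j) = 'C(j + p, p).
  by rewrite -(bin_sub (leq_addr p j)); congr 'C(_, _); lia.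
have e2 : 'C(p + 3, 3) = 'C(p + 3, p).
  by rewrite -(bin_sub (leq_addl p 3)); congr 'C(_, _); lia.
by rewrite e1 e2; apply: leq_bin2l; lia.
Qed.

Lemma bin3 p : 'C(p + 3, 3) * 6 = (p + 3) * (p + 2) * (p + 1).
Proof.
have := bin_ffact (p + 3) 3; rewrite !ffactnS ffactn0 (_ : 3`! = 6) //.
move=> ->; have -> : (p + 3).-1 = p + 2 by lia.
have -> : (p + 2).-1 = p + 1 by lia.
by rewrite muln1 mulnA.
Qed.

Lemma random_cond j p : 3 <= j -> j <= p -> 200 <= p ->
  'C(2 ^ (8 * (j + p) + 8), j + p) * 2 < 2 ^ 'C(j + p, j).
Proof.
move=> hj hjp hp.
set n := j + p.
apply: (@leq_ltn_trans (2 ^ ((8 * n + 8) * n + 1))).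
  by rewrite addn1 expnS mulnC leq_mul2l /= expnM bin_le_exp.
rewrite ltn_exp2l //.
apply: (@leq_trans 'C(p + 3, 3)); last exact: bin_k_lower.
have h6 := bin3 p.
suff : ((8 * n + 8) * n + 1).+1 * 6 <= 'C(p + 3, 3) * 6 by rewrite leq_mul2r.
rewrite h6.
have hn : n <= 2 * p by rewrite /n; lia.
have h1 : (8 * n + 8) * n <= (16 * p + 8) * (2 * p) by apply: leq_mul; lia.
have h2 : p * p * 200 <= p * p * p by rewrite leq_mul2l hp orbT.
nia.
Qed.

Lemma tower k N : 5 <= k -> 16 * k + 1700 <= N ->
  2 ^ (2 ^ (2 ^ N.+1)) < ramsey_number (complete_kgraph k N).
Proof.
move=> hk hN.
pose n := N %/ 8.
pose j := k - 2.
pose p := n - j.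
have hn : n = j + p by rewrite /p /n /j; lia.
have hj : 3 <= j by rewrite /j; lia.
have hjp : j <= p by rewrite /p /n /j; lia.
have hp : 200 <= p by rewrite /p /n /j; lia.
pose t := 8 * n + 8.
pose L := 2 ^ t.
have [chi1 g1] : exists chi : {set 'I_L} -> bool, good chi j n.
  apply: random_good; rewrite /L /t hn; exact: random_cond.
have L0 : 0 < L by rewrite /L expn_gt0.
have g2 := stepup_good L0 (ltac:(lia) : 2 < j) g1.
have L1 : 0 < 2 ^ L by rewrite expn_gt0.
have g3 := stepup_good L1 (ltac:(lia) : 2 < j.+1) g2.
have ek : j.+2 = k by rewrite /j; lia.
rewrite ek in g3.
have g4 := good_mono (ltac:(rewrite /n; lia) : 2 * (2 * n + j + 1) + j.+1 + 1 <= N) g3.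
have := RK_gt g4.
move=> h; apply: leq_trans _ h; rewrite ltnS leq_exp2l // leq_exp2l // /L leq_exp2l // /t /n; lia.
Qed.

Lemma pow3 N : 4 <= N -> 3 * N <= 2 ^ N.
Proof.
elim: N => [//|N IH] hN.
case: (eqVneq N 3) => [->//|ne].
rewrite expnS; have := IH ltac:(lia); lia.
Qed.

Lemma pow_bound N : 4 <= N -> N * N ^ (2 * 2 ^ (2 ^ N)) <= 2 ^ (2 ^ (2 ^ N.+1)).
Proof.
move=> hN.
set M := 2 ^ (2 ^ N).
have hM : 3 * N <= M.
  apply: leq_trans (pow3 hN) _; apply: ltnW; exact: (ltn_expl _ (isT : 1 < 2)).
have hNp : N <= 2 ^ N by apply: ltnW; exact: (ltn_expl _ (isT : 1 < 2)).
have h1 : N ^ (2 * M) <= (2 ^ N) ^ (2 * M).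
  by rewrite leq_exp2r // muln_gt0 /M expn_gt0.
apply: leq_trans (leq_mul hNp h1) _.
rewrite -expnM -expnD leq_exp2l // expnSr expnM -/M.
have hM1 : 1 <= M by lia.
nia.
Qed.

Definition pt (N t : nat) := N * N ^ (2 * t).
Definition MN (N : nat) := #|{set {set 'I_N}}|.
Definition unblocked N t := [forall E : {set {set 'I_N}},
  (ramsey_number E * N <= pt N t) || (pt N t * N <= ramsey_number E)].

Lemma pt_step N t1 t2 : 0 < N -> t1 < t2 -> pt N t1 * N * N <= pt N t2.
Proof.
move=> hN h; rewrite /pt -!mulnA leq_mul2l; apply/orP; right.
have -> : N ^ (2 * t1) * (N * N) = N ^ (2 * t1 + 2) by rewrite expnD.
by apply: leq_pexp2l => //; lia.
Qed.

Lemma gap_exists N : 2 <= N -> exists t : 'I_(MN N).+1, unblocked N t.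
Proof.
move=> hN.
case: (pickP (fun t : 'I_(MN N).+1 => unblocked N t)) => [t ht|hnone]; first by exists t.
exfalso.
pose bl (E : {set {set 'I_N}}) (t : nat) :=
  ~~ ((ramsey_number E * N <= pt N t) || (pt N t * N <= ramsey_number E)).
have blk : forall t : 'I_(MN N).+1, exists E, bl E t.
  move=> t; have := hnone t; rewrite /unblocked => /negbT; rewrite negb_forall.
  by case/existsP => E hE; exists E.
pose c (t : 'I_(MN N).+1) := odflt set0 [pick E | bl E t].
have cP : forall t, bl (c t) t.
  move=> t; rewrite /c; case: pickP => [E hE //|h].
  by have [E hE] := blk t; move: (h E); rewrite hE.
have cinj : injective c.
  move=> t1 t2 e; apply: ord_inj.
  have h1 := cP t1; have h2 := cP t2; rewrite e in h1.
  move: h1 h2; rewrite /bl; move: (ramsey_number (c t2)) => v.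
  case: (ltngtP t1 t2) => // h.
    have := pt_step (ltac:(lia) : 0 < N) h; move: (pt N t1) (pt N t2) => a b hab.
    rewrite !negb_or -!ltnNge => /andP[h1 h1'] /andP[h2 h2'].
    have h3 : v * N < a * N * N by rewrite ltn_pmul2r //; lia.
    lia.
  have := pt_step (ltac:(lia) : 0 < N) h; move: (pt N t1) (pt N t2) => b a hab.
  rewrite !negb_or -!ltnNge => /andP[h1 h1'] /andP[h2 h2'].
  have h3 : v * N < a * N * N by rewrite ltn_pmul2r //; lia.
  lia.
have := leq_card c cinj; rewrite card_ord => h.
have h' : MN N < MN N := h.
by rewrite ltnn in h'.
Qed.

Definition RK (k N : nat) := ramsey_number (complete_kgraph k N).

Definition hh (k N : nat) : nat :=
  if [pick t : 'I_(MN N).+1 | unblocked N t && (pt N t <= RK k N)] is Some t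
  then pt N t else N.

Lemma pt_ge N t : N <= pt N t.
Proof. by case: N => [//|N]; rewrite /pt leq_pmulr // expn_gt0. Qed.

Lemma hh_ge k N : N <= hh k N.
Proof. by rewrite /hh; case: pickP => [t _|_] //; apply: pt_ge. Qed.

Lemma hh_le k N : hh k N <= RK k N.
Proof. by rewrite /hh; case: pickP => [t /andP[_ h]|_] //; apply: RK_ge. Qed.

Lemma card_setT2 (T : finType) : #|{set T}| = 2 ^ #|T|.
Proof.
transitivity #|powerset [set: T]|; last by rewrite card_powerset cardsT.
by apply: eq_card => A; rewrite !inE subsetT.
Qed.

Lemma MN_eq N : MN N = 2 ^ (2 ^ N).
Proof. by rewrite /MN !card_setT2 card_ord. Qed.

Lemma hh_gap k N : 5 <= k -> 16 * k + 1700 <= N -> forall E : {set {set 'I_N}},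
  (ramsey_number E * N <= hh k N) || (hh k N * N <= ramsey_number E).
Proof.
move=> hk hN E; rewrite /hh; case: pickP => [t /andP[/forallP ht _]|hnone].
  exact: ht.
exfalso.
have [t ht] := gap_exists (ltac:(lia) : 2 <= N).
have := hnone t; rewrite ht /=; move/negP; apply.
apply: leq_trans (ltnW (tower hk hN)).
apply: leq_trans (pow_bound (ltac:(lia) : 4 <= N)).
rewrite /pt leq_mul2l; apply/orP; right; apply: leq_pexp2l; first lia.
by have := ltn_ord t; have := MN_eq N; lia.
Qed.

Lemma fex k n : exists v, [exists m : 'I_v.+1, (n <= m) && (hh k m == v)].
Proof.
exists (hh k n); apply/existsP.
by exists (Ordinal (ltac:(rewrite ltnS; exact: hh_ge) : n < (hh k n).+1)) => /=; rewrite leqnn eqxx.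
Qed.

Definition ff k n := ex_minn (fex k n).

Lemma ff_spec k n : exists m, n <= m /\ hh k m = ff k n.
Proof.
rewrite /ff; case: ex_minnP => v /existsP [m /andP [h1 /eqP h2]] _.
by exists m.
Qed.

Lemma ff_min k n m : n <= m -> ff k n <= hh k m.
Proof.
move=> h; rewrite /ff; case: ex_minnP => v _ hmin; apply: hmin.
apply/existsP; exists (Ordinal (ltac:(rewrite ltnS; exact: hh_ge) : m < (hh k m).+1)) => /=.
by rewrite h eqxx.
Qed.

Lemma ff_mono k n n' : n <= n' -> ff k n <= ff k n'.
Proof.
move=> h; have [m [hm <-]] := ff_spec k n'; apply: ff_min; lia.
Qed.

Lemma ff_ge k n : n <= ff k n.
Proof. have [m [hm <-]] := ff_spec k n; have := hh_ge k m; lia. Qed.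

Lemma ff_le k n : ff k n <= RK k n.
Proof. exact: leq_trans (ff_min k (leqnn n)) (hh_le k n). Qed.

Lemma ff_record k n1 : exists m, n1 <= m /\ ff k m = hh k m.
Proof.
have [m [hm e]] := ff_spec k n1.
exists m; split => //; apply/eqP; rewrite eqn_leq ff_min //=.
by rewrite e ff_mono.
Qed.

Unset Implicit Arguments.
(* restore the notation state (R_scope for %R) *)
From mathcomp Require Import all_boot.
From Stdlib Require Import Rdefinitions Raxioms.
From mathcomp Require Import zify.
From Stdlib Require Import RIneq Rbasic_fun Lra.

Lemma INR_leq a b : a <= b -> (INR a <= INR b)%R.
Proof. by move=> h; apply: le_INR; apply/leP. Qed.

Theorem theorem1p2 (k : nat) (hk : 5 <= k) :
  exists f : nat -> nat,
    (forall m n : nat, m <= n -> f m <= f n) /\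
    (forall n : nat, n <= f n /\ f n <= ramsey_number (complete_kgraph k n)) /\
    (forall c C : R, (0 < c)%R -> (0 < C)%R ->
       forall n0 : nat, exists n : nat, n0 < n /\
         forall E : {set {set 'I_n}}, uniform k E ->
           (INR (ramsey_number E) <= c * INR (f n))%R \/
           (C * INR (f n) <= INR (ramsey_number E))%R).
Proof.
exists (ff k); split; first by move=> m n; apply: ff_mono.
split; first by move=> n; split; [exact: ff_ge | exact: ff_le].
move=> c C hc hC n0.
have [z hz] := INR_unbounded (Rmax (/ c) C).
have hz1 : (/ c < INR z)%R by have := Rmax_l (/ c) C; lra.
have hz2 : (C < INR z)%R by have := Rmax_r (/ c) C; lra.
have [m [hm fm]] := ff_record k (maxn (maxn n0.+1 (16 * k + 1700)) z).
exists m; split; first lia.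
move=> E _.
have hzm : (INR z <= INR m)%R by apply: INR_leq; lia.
have hcm : (1 < c * INR m)%R.
  have : (c * / c < c * INR m)%R by apply: Rmult_lt_compat_l; lra.
  by rewrite Rinv_r; lra.
have hR0 := pos_INR (ramsey_number E).
have hf0 := pos_INR (ff k m).
have := hh_gap hk (ltac:(lia) : 16 * k + 1700 <= m) E.
rewrite -fm; case/orP => h; [left|right].
  have := @INR_leq _ _ h; rewrite mult_INR => h'.
  nra.
have := @INR_leq _ _ h; rewrite mult_INR => h'.
nra.
Qed.
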